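(* Let $p$ be a prime. Let $g(x)\in\mathbb{Z}_p[x]$ be a monic polynomial, let $K$ be a splitting field of $g(x)$ over $\mathbb{Q}_p$, and let $\beta\in K$ be a root of $g(x)$ with $|\beta|_p=1$. Let $e$ be the ramification index of $K/\mathbb{Q}_p$, and let $$q=\begin{cases}1 & \text{if } e<p-1,\\ p^{\lceil \log_p(e+1)\rceil} & \text{if } e\geq p-1,\end{cases}$$ where $\log_p$ here is the real logarithm to base $p$. Then $\left|\left(\frac{\beta}{\omega(\beta)}\right)^q-1\right|_p<p^{-1/(p-1)}$.
   Context: For a finite extension $K/\mathbb{Q}_p$ of degree $d$, $|\cdot|_p$ is the unique absolute value on $K$ extending the $p$-adic absolute value on $\mathbb{Q}_p$; its valuation $\nu_p$ (with $|x|_p=p^{-\nu_p(x)}$) has image $\frac1e\mathbb Z$ on $K^\times$, where $e$ is the ramification index, and $f=d/e$. A uniformizer is $\pi\in K$ with $\nu_p(\pi)=1/e$. Let $\mathcal O_K=\{x\in K:|x|_p\le 1\}$; its residue field $\mathcal O_K/\pi\mathcal O_K$ has $p^f$ elements and $\mathcal O_K$ contains the $(p^f-1)$-st roots of unity, which lie in distinct residue classes mod $\pi$. For $x\in\mathcal O_K$ with $x\not\equiv 0 \pmod \pi$, $\omega(x)$ denotes the unique $(p^f-1)$-st root of unity in $\mathcal O_K$ congruent to $x$ modulo $\pi$. *)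

(* Defs.v *)
From HB Require Import structures.
From mathcomp Require Import all_boot all_order all_algebra.
From mathcomp Require Import reals exp.
From Stdlib Require Import ClassicalEpsilon.
Set Implicit Arguments. Unset Strict Implicit. Unset Printing Implicit Defensive.
Import Order.TTheory GRing.Theory Num.Theory.
Local Open Scope ring_scope.

(* A finite extension K of Q_p, described intrinsically: a field K with an
   absolute value abs : K -> R (the unique extension of |.|_p), which is
   multiplicative and ultrametric with |p| = 1/p, complete, and finite
   dimensional over the closure of Q in K (which is Q_p). *)

Section PadicDefs.
Variables (R : realType) (K : fieldType) (abs : K -> R).

(* the closure of Q in K, i.e. Q_p inside K *)
Definition in_Qp (x : K) : Prop :=
  forall eps : R, 0 < eps -> exists r : rat, abs (x - ratr r) < eps.

Definition in_Zp (x : K) : Prop := in_Qp x /\ abs x <= 1.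

Definition in_OK (x : K) : Prop := abs x <= 1.

Definition cauchy_seq (u : nat -> K) : Prop :=
  forall eps : R, 0 < eps -> exists N, forall m n, (N <= m)%N -> (N <= n)%N ->
    abs (u m - u n) < eps.

Definition converges (u : nat -> K) : Prop :=
  exists l : K, forall eps : R, 0 < eps -> exists N, forall n, (N <= n)%N ->
    abs (u n - l) < eps.

Definition finite_over_Qp : Prop :=
  exists s : seq K, forall x : K, exists c : seq K,
    [/\ size c = size s, (forall i, in_Qp (nth 0 c i)) &
        x = \sum_(i < size s) nth 0 c i * nth 0 s i].

Record padic_field (p : nat) : Prop := PadicField {
  pf_abs0 : abs 0 = 0;
  pf_abs_eq0 : forall x, abs x = 0 -> x = 0;
  pf_absM : forall x y, abs (x * y) = abs x * abs y;
  pf_ultra : forall x y, abs (x + y) <= Num.max (abs x) (abs y);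
  pf_abs_p : abs p%:R = (p%:R)^-1;
  pf_complete : forall u, cauchy_seq u -> converges u;
  pf_finite : finite_over_Qp
}.

Definition generated_over_Qp (rs : seq K) : Prop :=
  forall S : K -> Prop,
    (forall x, in_Qp x -> S x) -> (forall x, x \in rs -> S x) ->
    (forall x y, S x -> S y -> S (x + y)) ->
    (forall x, S x -> S (- x)) ->
    (forall x y, S x -> S y -> S (x * y)) ->
    (forall x, x != 0 -> S x -> S x^-1) ->
    forall x, S x.

Definition splitting_field_over_Qp (g : {poly K}) : Prop :=
  exists rs : seq K,
    g = \prod_(r <- rs) ('X - r%:P) /\ generated_over_Qp rs.

Definition ram_index (p e : nat) : Prop :=
  (0 < e)%N /\
  (forall x : K, x != 0 -> exists k : int, abs x = powR p%:R (k%:~R / e%:R)) /\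
  (exists pi : K, abs pi = powR p%:R (- (e%:R)^-1)).

(* the residue field O_K / pi O_K has exactly n elements *)
Definition residue_card (n : nat) : Prop :=
  exists reps : seq K,
    [/\ size reps = n,
        (forall r, r \in reps -> in_OK r),
        (forall i j, (i < n)%N -> (j < n)%N -> i <> j ->
           ~ (abs (nth 0 reps i - nth 0 reps j) < 1)) &
        (forall x, in_OK x -> exists2 r, r \in reps & abs (x - r) < 1)].

Definition residue_degree (p f : nat) : Prop := residue_card (p ^ f).

Definition omega (p f : nat) (x : K) : K :=
  epsilon (inhabits 0)
    (fun z : K => z ^+ (p ^ f).-1 = 1 /\ abs (x - z) < 1).

End PadicDefs.

Definition qexp (R : realType) (p e : nat) : nat :=
  if (e < p.-1)%N then 1%N
  else (p ^ `|Num.ceil (ln (e.+1%:R : R) / ln (p%:R : R))|)%N.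

(* Main.v *)
Require Import Defs.
From HB Require Import structures.
From mathcomp Require Import all_boot all_order all_algebra.
From mathcomp Require Import reals exp.
From mathcomp Require Import ring lra zify.
From Stdlib Require Import ClassicalEpsilon.
Set Implicit Arguments. Unset Strict Implicit. Unset Printing Implicit Defensive.
Import Order.TTheory GRing.Theory Num.Theory.
Local Open Scope ring_scope.

Lemma bernoulli (R : realType) (d : R) n : 0 <= d -> 1 + n%:R * d <= (1 + d) ^+ n.
Proof.
move=> d0; elim: n => [|n IH]; first by rewrite mul0r addr0 expr0.
rewrite exprS -natr1.
have h1 : 0 <= (1 + d) ^+ n by apply: exprn_ge0; lra.
have h2 : 0 <= n%:R * d by apply: mulr_ge0.
nra.
Qed.

Lemma geo (R : realType) (r eps : R) : 0 <= r -> r < 1 -> 0 < eps ->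
  exists n, r ^+ n < eps.
Proof.
move=> r0 r1 e0.
have [->|rn0] := eqVneq r 0; first by exists 1%N; rewrite expr1.
have rp : 0 < r by rewrite lt_def rn0.
set d := r^-1 - 1.
have hd : 0 < d.
  rewrite /d subr_gt0 -[X in X < _](mulfV rn0) -[X in _ < X]mul1r.
  by rewrite ltr_pM2r ?invr_gt0.
set x := eps^-1 / d.
have x0 : 0 <= x by rewrite /x divr_ge0 // ltW // invr_gt0.
have hn := archi_boundP x0.
exists (Num.Def.archi_bound x).
set n := Num.Def.archi_bound x in hn *.
have hb := @bernoulli R d n (ltW hd).
have e1 : 1 + d = r^-1 by rewrite /d addrC subrK.
rewrite e1 in hb.
rewrite exprVn in hb.
have hrn : r ^+ n * (r ^+ n)^-1 = 1 by rewrite mulfV // expf_neq0.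
have hnd : eps^-1 < n%:R * d.
  by rewrite -ltr_pdivrMr // -/x.
have he : eps * eps^-1 = 1 by rewrite mulfV // gt_eqF.
have a0 : 0 < r ^+ n by apply: exprn_gt0.
have hb' : eps^-1 < (r ^+ n)^-1 by lra.
by rewrite -(ltf_pV2 (x:=eps) (y:=r ^+ n)) // posrE.
Qed.

Section Basic.
Variable R : realType.
Variable K : fieldType.
Variable abs : K -> R.
Variable p : nat.
Hypothesis pp : prime p.
Hypothesis H : padic_field abs p.
Hypothesis Hpos : forall x, x != 0 -> 0 < abs x.

Lemma p_gt0R : (0 : R) < p%:R.
Proof. by rewrite ltr0n prime_gt0. Qed.

Lemma abs_ge0 x : 0 <= abs x.
Proof.
have [->|/Hpos/ltW//] := eqVneq x 0; by rewrite (pf_abs0 H).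
Qed.

Lemma abs1 : abs 1 = 1.
Proof.
have h := pf_absM H p%:R 1; rewrite mulr1 (pf_abs_p H) in h.
have hp : (p%:R : R)^-1 != 0 by rewrite invr_eq0 gt_eqF // p_gt0R.
by apply: (mulfI hp); rewrite -h mulr1.
Qed.

Lemma absN1 : abs (-1) = 1.
Proof.
have h := pf_absM H (-1) (-1); rewrite mulrNN mulr1 abs1 in h.
have h0 := abs_ge0 (-1).
nra.
Qed.

Lemma absN x : abs (- x) = abs x.
Proof. by rewrite -mulN1r (pf_absM H) absN1 mul1r. Qed.

Lemma absB x y : abs (x - y) = abs (y - x).
Proof. by rewrite -absN opprB. Qed.

Lemma absX x n : abs (x ^+ n) = abs x ^+ n.
Proof. elim: n => [|n IH]; first by rewrite !expr0 abs1. by rewrite !exprS (pf_absM H) IH. Qed.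

Lemma absV x : x != 0 -> abs x^-1 = (abs x)^-1.
Proof.
move=> x0; have h := pf_absM H x x^-1; rewrite mulfV // abs1 in h.
have ax : abs x != 0 by rewrite gt_eqF // Hpos.
by apply: (mulfI ax); rewrite -h mulfV.
Qed.

Lemma ultraD x y B : abs x <= B -> abs y <= B -> abs (x + y) <= B.
Proof.
move=> hx hy; apply: le_trans (pf_ultra H x y) _.
by rewrite ge_max hx hy.
Qed.

Lemma ultraDlt x y B : abs x < B -> abs y < B -> abs (x + y) < B.
Proof.
move=> hx hy; apply: le_lt_trans (pf_ultra H x y) _.
by rewrite gt_max hx hy.
Qed.

Lemma ultraB x y B : abs x <= B -> abs y <= B -> abs (x - y) <= B.
Proof. by move=> hx hy; apply: ultraD; rewrite ?absN. Qed.

Lemma ultraBlt x y B : abs x < B -> abs y < B -> abs (x - y) < B.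
Proof. by move=> hx hy; apply: ultraDlt; rewrite ?absN. Qed.

Lemma abs_sum (I : Type) (r : seq I) (P : pred I) (F : I -> K) B :
  0 <= B -> (forall i, P i -> abs (F i) <= B) -> abs (\sum_(i <- r | P i) F i) <= B.
Proof.
move=> B0 hF; apply: (big_ind (fun x => abs x <= B)).
- by rewrite (pf_abs0 H).
- by move=> x y; apply: ultraD.
- exact: hF.
Qed.

Lemma abs_natr n : abs n%:R <= 1.
Proof.
elim: n => [|n IH]; first by rewrite mulr0n (pf_abs0 H) ler01.
by rewrite -addn1 natrD; apply: ultraD => //; rewrite abs1.
Qed.

Lemma abs_unit_close x y : abs x = 1 -> abs (x - y) < 1 -> abs y = 1.
Proof.
move=> hx hxy; apply/eqP; rewrite eq_le; apply/andP; split.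
  have -> : y = x - (x - y) by rewrite opprB addrC subrK.
  by apply: ultraB; [rewrite hx | exact: ltW].
rewrite leNgt; apply/negP => hy.
have : abs (y + (x - y)) < 1 by apply: ultraDlt.
by rewrite addrC subrK hx ltxx.
Qed.


Lemma binom_p t : abs t <= 1 ->
  abs ((1 + t) ^+ p - 1) <= Num.max (abs t ^+ p) (abs t / p%:R).
Proof.
move=> t1; have t0 := abs_ge0 t.
rewrite [1 + t]addrC exprD1n big_ord_recl /= expr0 bin0 mulr1n [1 + _]addrC addrK.
apply: abs_sum => [|i _]; first by rewrite le_max exprn_ge0.
rewrite /bump add1n -mulr_natr (pf_absM H) absX.
have ip := ltn_ord i.
have [ei|ne] := eqVneq i.+1 p.
  by rewrite ei binn abs1 mulr1 le_max lexx.
have ilt : (0 < i.+1 < p)%N by rewrite /= ltn_neqAle ne ip.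
have /dvdnP [m hm] := prime_dvd_bin pp ilt.
rewrite hm natrM (pf_absM H) (pf_abs_p H) le_max; apply/orP; right.
have hm1 := abs_natr m; have hm0 := abs_ge0 m%:R.
have pi0 : 0 <= (p%:R : R)^-1 by rewrite invr_ge0 ler0n.
have ti : abs t ^+ i.+1 <= abs t.
  by rewrite exprS ler_piMr // exprn_ile1.
apply: ler_pM => //; first exact: exprn_ge0.
  by apply: mulr_ge0.
by rewrite -[X in _ <= X]mul1r ler_pM.
Qed.


Lemma unit_pow_diff x y : abs x = 1 -> abs y = 1 ->
  abs (x ^+ p - y ^+ p) <= Num.max (abs (x - y) ^+ p) (abs (x - y) / p%:R).
Proof.
move=> hx hy.
have y0 : y != 0 by apply/eqP => y0; move: hy; rewrite y0 (pf_abs0 H) => /eqP; rewrite eq_sym oner_eq0.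
set t := (x - y) / y.
have ht : abs t = abs (x - y) by rewrite /t (pf_absM H) absV // hy invr1 mulr1.
have hxt : x = y * (1 + t) by rewrite /t mulrDr mulr1 mulrC divfK // addrC subrK.
have -> : x ^+ p - y ^+ p = y ^+ p * ((1 + t) ^+ p - 1)
  by rewrite hxt exprMn mulrBr mulr1.
rewrite (pf_absM H) absX hy expr1n mul1r -ht; apply: binom_p.
rewrite ht; apply: ultraB; by rewrite ?hx ?hy.
Qed.

Lemma p_ge2 : (2 <= p)%N. Proof. exact: prime_gt1. Qed.

Lemma unit_pow_decay x y d d0 : abs x = 1 -> abs y = 1 ->
  abs (x - y) <= d -> d <= d0 -> d0 < 1 ->
  abs (x ^+ p - y ^+ p) <= Num.max d0 (p%:R^-1) * d.
Proof.
move=> hx hy hd dd0 d01.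
have a0 := abs_ge0 (x - y); set a := abs (x - y) in a0 hd *.
apply: le_trans (unit_pow_diff hx hy) _.
have d0p : 0 <= d by apply: le_trans hd.
have pi0 : 0 <= (p%:R : R)^-1 by rewrite invr_ge0 ler0n.
have m0 : 0 <= Num.max d0 (p%:R^-1) by rewrite le_max pi0 orbT.
rewrite ge_max; apply/andP; split.
- have pe : p = (p.-1).+1 by rewrite prednK // prime_gt0.
  rewrite pe exprSr; apply: ler_pM => //; first exact: exprn_ge0.
  rewrite le_max; apply/orP; left.
  have a1 : a <= 1 by apply: ltW; apply: le_lt_trans d01; apply: le_trans dd0.
  have p1 : (0 < p.-1)%N by rewrite -ltnS -pe prime_gt1.
  case: (p.-1) p1 => // n _; rewrite exprS.
  apply: le_trans (_ : a * 1 <= d0); first by apply: ler_pM => //; [exact: exprn_ge0|exact: exprn_ile1].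
  by rewrite mulr1; apply: le_trans dd0.
- rewrite mulrC; apply: ler_pM => //; by rewrite le_max lexx orbT.
Qed.


Lemma prod_close (I : finType) (P : pred I) (F G : I -> K) :
  (forall i, P i -> [/\ abs (F i) <= 1, abs (G i) <= 1 & abs (F i - G i) < 1]) ->
  [/\ abs (\prod_(i | P i) F i) <= 1, abs (\prod_(i | P i) G i) <= 1 &
      abs (\prod_(i | P i) F i - \prod_(i | P i) G i) < 1].
Proof.
move=> hFG.
apply: (big_ind2 (fun a b => [/\ abs a <= 1, abs b <= 1 & abs (a - b) < 1])).
- by rewrite abs1 subrr (pf_abs0 H) ltr01.
- move=> a1 b1 a2 b2 [ha1 hb1 hab1] [ha2 hb2 hab2].
  have ge := abs_ge0.
  split; rewrite ?(pf_absM H); first by rewrite -(mulr1 1) ler_pM.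
    by rewrite -(mulr1 1) ler_pM.
  have -> : a1 * a2 - b1 * b2 = a1 * (a2 - b2) + (a1 - b1) * b2 by ring.
  apply: ultraDlt; rewrite (pf_absM H).
    apply: (@le_lt_trans _ _ (abs (a2 - b2))) => //.
    by rewrite -[X in _ <= X]mul1r ler_wpM2r.
  apply: (@le_lt_trans _ _ (abs (a1 - b1))) => //.
  by rewrite -[X in _ <= X]mulr1 ler_wpM2l.
- exact: hFG.
Qed.

Lemma fermat N : residue_card abs N ->
  forall x, abs x = 1 -> abs (x ^+ N.-1 - 1) < 1.
Proof.
move=> [reps [hsz hO hdist hcov]] x hx.
have a01 : abs 0 <= 1 by rewrite (pf_abs0 H) ler01.
have [r0 r0in _] := hcov 0 a01.
have N0 : (0 < N)%N by rewrite -hsz; case: (reps) r0in.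
pose i00 : 'I_N := Ordinal N0.
pose w (i : 'I_N) := nth 0 reps i.
pose cls y := odflt i00 [pick i | abs (y - w i) < 1].
have wO i : abs (w i) <= 1 by apply: hO; apply: mem_nth; rewrite hsz.
have cls_spec y : abs y <= 1 -> abs (y - w (cls y)) < 1.
  move=> /hcov [r rin hr]; rewrite /cls; case: pickP => [i //|none].
  have ilt : (index r reps < N)%N by rewrite -hsz index_mem.
  by move: (none (Ordinal ilt)); rewrite /w /= nth_index // hr.
have wdist i j : abs (w i - w j) < 1 -> i = j.
  move=> h; apply/val_inj/eqP; case: eqP => //= ne.
  by exfalso; apply: (hdist i j) => //; rewrite -hsz ?ltn_ord // -hsz ltn_ord.
have cls_uniq y i : abs (y - w i) < 1 -> cls y = i.
  move=> h; have yO : abs y <= 1.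
    have -> : y = (y - w i) + w i by rewrite subrK.
    by apply: ultraD => //; apply: ltW.
  apply: wdist; have -> : w (cls y) - w i = (y - w i) - (y - w (cls y)) by ring.
  by apply: ultraBlt => //; apply: cls_spec.
pose i0 := cls 0.
have wi0 : abs (w i0) < 1 by have := cls_spec 0 a01; rewrite sub0r absN.
have wunit i : i != i0 -> abs (w i) = 1.
  move=> ne; apply/eqP; rewrite eq_le wO /= leNgt; apply/negP => h.
  by move/eqP: ne; apply; rewrite /i0; symmetry; apply: cls_uniq; rewrite add0r absN.
pose phi i := cls (x * w i).
have phi_inj : injective phi.
  move=> i j hij; apply: wdist.
  have hi : abs (x * w i - w (phi i)) < 1 by apply: cls_spec; rewrite (pf_absM H) hx mul1r.
  have hj : abs (x * w j - w (phi j)) < 1 by apply: cls_spec; rewrite (pf_absM H) hx mul1r.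
  have : abs (x * (w i - w j)) < 1.
    have -> : x * (w i - w j) = (x * w i - w (phi i)) - (x * w j - w (phi j)) by rewrite hij; ring.
    exact: ultraBlt.
  by rewrite (pf_absM H) hx mul1r.
have phi0 : phi i0 = i0.
  apply: cls_uniq; apply: ultraBlt => //; by rewrite (pf_absM H) hx mul1r.
have phiC i : (phi i != i0) = (i != i0).
  by apply/negb_inj; rewrite !negbK; apply/eqP/eqP => [h|->//]; apply: phi_inj; rewrite h phi0.
pose P := \prod_(i in predC1 i0) w i.
have hP : abs P = 1.
  rewrite /P; apply: (big_ind (fun a => abs a = 1)); first exact: abs1.
    by move=> a b ha hb; rewrite (pf_absM H) ha hb mulr1.
  by move=> i /= ne; apply: wunit.
have hre : P = \prod_(i in predC1 i0) w (phi i).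
  rewrite /P (reindex_inj phi_inj); apply: eq_bigl => i /=; by rewrite !inE phiC.
have hcl : forall i, predC1 i0 i ->
    [/\ abs (x * w i) <= 1, abs (w (phi i)) <= 1 & abs (x * w i - w (phi i)) < 1].
  move=> i _; split; first by rewrite (pf_absM H) hx mul1r.
    by apply: wO.
  by apply: cls_spec; rewrite (pf_absM H) hx mul1r.
have [_ _ hc] := prod_close hcl.
move: hc; rewrite -hre prodrMl cardC1 card_ord -/P.
have -> : x ^+ N.-1 * P - P = (x ^+ N.-1 - 1) * P by ring.
by rewrite (pf_absM H) hP mulr1.
Qed.

Lemma unit_pow_le x y : abs x = 1 -> abs y = 1 -> abs (x ^+ p - y ^+ p) <= abs (x - y).
Proof.
move=> hx hy; apply: le_trans (unit_pow_diff hx hy) _.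
have a0 := abs_ge0 (x - y).
have a1 : abs (x - y) <= 1 by apply: ultraB; rewrite ?hx ?hy.
rewrite ge_max; apply/andP; split.
  have pe : p = (p.-1).+1 by rewrite prednK // prime_gt0.
  rewrite pe exprS -[X in _ <= X]mulr1 ler_wpM2l //; exact: exprn_ile1.
rewrite ler_pdivrMr ?p_gt0R // -[X in X <= _]mulr1 ler_wpM2l // ler1n prime_gt0 //.
Qed.

Lemma unit_powpk_le x y k : abs x = 1 -> abs y = 1 ->
  abs (x ^+ (p ^ k) - y ^+ (p ^ k)) <= abs (x - y).
Proof.
elim: k x y => [|k IH] x y hx hy; first by rewrite expn0 !expr1.
rewrite expnS !exprM; apply: le_trans (IH _ _ _ _) (unit_pow_le hx hy);
  by rewrite absX ?hx ?hy expr1n.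
Qed.

Lemma decay_pk x y f d d0 : (0 < f)%N -> abs x = 1 -> abs y = 1 ->
  abs (x - y) <= d -> d <= d0 -> d0 < 1 ->
  abs (x ^+ (p ^ f) - y ^+ (p ^ f)) <= Num.max d0 (p%:R^-1) * d.
Proof.
case: f => // k _ hx hy hd dd0 d01.
rewrite expnSr !exprM; apply: unit_pow_decay => //; rewrite ?absX ?hx ?hy ?expr1n //.
exact: le_trans (unit_powpk_le _ hx hy) hd.
Qed.

Lemma teich N f : N = (p ^ f)%N -> (0 < f)%N -> residue_card abs N ->
  forall beta, abs beta = 1 -> exists z, z ^+ N.-1 = 1 /\ abs (beta - z) < 1.
Proof.
move=> hN f0 hres beta hb.
have N0 : (0 < N)%N by rewrite hN expn_gt0 prime_gt0.
set d0 := abs (beta ^+ N - beta).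
have d00 : 0 <= d0 := abs_ge0 _.
have d01 : d0 < 1.
  rewrite /d0 -(prednK N0) exprS.
  have -> : beta * beta ^+ N.-1 - beta = beta * (beta ^+ N.-1 - 1) by ring.
  by rewrite (pf_absM H) hb mul1r; apply: (fermat hres).
set rho := Num.max d0 (p%:R^-1).
have pi0 : 0 <= (p%:R : R)^-1 by rewrite invr_ge0 ler0n.
have pi1 : (p%:R : R)^-1 < 1 by rewrite invf_lt1 ?p_gt0R // ltr1n prime_gt1.
have r0 : 0 <= rho by rewrite le_max pi0 orbT.
have r1 : rho < 1 by rewrite gt_max d01 pi1.
pose u n := beta ^+ (N ^ n)%N.
have uS n : u n.+1 = u n ^+ N by rewrite /u expnSr exprM.
have uU n : abs (u n) = 1 by rewrite /u absX hb expr1n.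
have rn1 n : rho ^+ n <= 1 by apply: exprn_ile1 => //; apply: ltW.
have D n : abs (u n.+1 - u n) <= rho ^+ n * d0.
  elim: n => [|n IH]; first by rewrite /u expn0 expn1 expr1 expr0 mul1r.
  have -> : rho ^+ n.+1 * d0 = rho * (rho ^+ n * d0) by rewrite exprS mulrA.
  rewrite (uS n.+1) (uS n) hN; apply: decay_pk => //; rewrite -?hN -?uS //.
  by rewrite -[X in _ <= X]mul1r ler_wpM2r.
have C m n : abs (u (n + m)%N - u n) <= rho ^+ n * d0.
  elim: m => [|m IH]; first by rewrite addn0 subrr (pf_abs0 H) mulr_ge0 // exprn_ge0.
  rewrite addnS.
  have -> : u (n + m).+1 - u n = (u (n + m).+1 - u (n + m)%N) + (u (n + m)%N - u n) by ring.
  apply: ultraD => //; apply: le_trans (D _) _.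
  by rewrite exprD -mulrA ler_wpM2l ?exprn_ge0 // -[X in _ <= X]mul1r ler_wpM2r.
have CB n : abs (u n - beta) <= d0.
  by have := C n 0%N; rewrite add0n expr0 mul1r /u expn0 expr1.
have hcs : cauchy_seq abs u.
  move=> eps e0; have [n0 hn0] := geo r0 r1 e0.
  exists n0 => m n hm hn.
  have hr : rho ^+ n0 * d0 < eps.
    by apply: le_lt_trans hn0; rewrite -[X in _ <= X]mulr1 ler_wpM2l ?exprn_ge0 // ltW.
  have hm' := C (m - n0)%N n0; rewrite subnKC // in hm'.
  have hn' := C (n - n0)%N n0; rewrite subnKC // in hn'.
  have -> : u m - u n = (u m - u n0) - (u n - u n0) by ring.
  by apply: ultraBlt; apply: le_lt_trans hr.
have [l hl] := pf_complete H hcs.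
have hbl : abs (beta - l) < 1.
  have [n1 hn1] := hl 1 ltr01.
  have -> : beta - l = (beta - u n1) + (u n1 - l) by ring.
  apply: ultraDlt; last exact: hn1.
  by rewrite absB; apply: le_lt_trans (CB _) d01.
have hlU : abs l = 1 := abs_unit_close hb hbl.
have l0 : l != 0 by apply/eqP => l0; move: hlU; rewrite l0 (pf_abs0 H) => /eqP; rewrite eq_sym oner_eq0.
have hlN : l ^+ N = l.
  apply/eqP; rewrite -subr_eq0; apply/negPn/negP => ne.
  have e0 := Hpos ne; set eps := abs (l ^+ N - l) in e0.
  have [n1 hn1] := hl eps e0; have [n2 hn2] := geo r0 r1 e0.
  set n := (n1 + n2)%N.
  have hu : abs (u n - l) < eps by apply: hn1; rewrite leq_addr.
  have hd : abs (u n.+1 - u n) < eps.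
    apply: le_lt_trans (D n) _; apply: le_lt_trans hn2.
    rewrite /n exprD.
    have h12 : rho ^+ n1 * rho ^+ n2 <= rho ^+ n2.
      by rewrite -[X in _ <= X]mul1r ler_wpM2r ?exprn_ge0.
    apply: le_trans h12; rewrite -[X in _ <= X]mulr1 ler_wpM2l ?mulr_ge0 ?exprn_ge0 //.
    exact: ltW.
  have hlu : abs (l ^+ N - u n ^+ N) < eps.
    by rewrite hN; apply: le_lt_trans (unit_powpk_le _ hlU (uU n)) _; rewrite absB.
  have : abs (l ^+ N - l) < eps.
    have -> : l ^+ N - l = (l ^+ N - u n ^+ N) + (u n.+1 - u n) + (u n - l) by rewrite uS; ring.
    by apply: ultraDlt => //; apply: ultraDlt.
  by rewrite ltxx.
exists l; split => //.
apply: (mulfI l0); rewrite mulr1 -exprS prednK //.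
Qed.

Lemma iterate_bound u c : abs u = 1 -> abs (u - 1) <= c -> forall j,
  abs (u ^+ (p ^ j) - 1) ^+ p.-1 < p%:R^-1 \/ abs (u ^+ (p ^ j) - 1) <= c ^+ (p ^ j).
Proof.
move=> hu hc; elim=> [|j IH]; first by right; rewrite expn0 !expr1.
set v := u ^+ (p ^ j) in IH *.
have hv : abs v = 1 by rewrite /v absX hu expr1n.
have h1 : abs (1 : K) = 1 := abs1.
have -> : u ^+ (p ^ j.+1) = v ^+ p by rewrite /v expnSr exprM.
set s := abs (v - 1) in IH *.
have s0 : 0 <= s := abs_ge0 _.
have le1 : abs (v ^+ p - 1) <= s by have := unit_pow_le hv h1; rewrite expr1n.
have s'0 := abs_ge0 (v ^+ p - 1).
have [lt|ge] := ltP (s ^+ p.-1) (p%:R^-1).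
  left; apply: le_lt_trans lt; exact: lerXn2r.
case: IH => [lt|IH]; first by move: ge; rewrite leNgt lt.
right.
have hb : abs (v ^+ p - 1) <= Num.max (s ^+ p) (s / p%:R).
  have -> : v ^+ p - 1 = (1 + (v - 1)) ^+ p - 1 by rewrite [1 + _]addrC subrK.
  by apply: binom_p; apply: ultraB; [rewrite hv | rewrite abs1].
have pe : p = (p.-1).+1 by rewrite prednK // prime_gt0.
have sp : s / p%:R <= s ^+ p.
  by rewrite {2}pe exprSr mulrC ler_wpM2r.
have hsp : s ^+ p <= c ^+ (p ^ j.+1).
  rewrite expnSr exprM; apply: lerXn2r => //; rewrite ?nnegrE //.
  exact: le_trans IH.
apply: le_trans hb _; rewrite ge_max hsp /=; exact: le_trans sp hsp.
Qed.

End Basic.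

Lemma ltr_powRr (R : realType) (a : R) : 1 < a -> {mono powR a : x y / x < y}.
Proof.
move=> a1 x y; rewrite /powR gt_eqF ?(lt_trans ltr01) // ltr_expR.
by rewrite ltr_pM2r // ln_gt0.
Qed.

Lemma lerr_powRr (R : realType) (a : R) : 1 < a -> {mono powR a : x y / x <= y}.
Proof.
move=> a1 x y; rewrite /powR gt_eqF ?(lt_trans ltr01) // ler_expR.
by rewrite ler_pM2r // ln_gt0.
Qed.

Lemma powR_expn (R : realType) (a y : R) n : 0 <= a -> powR a y ^+ n = powR a (y * n%:R).
Proof. by move=> a0; rewrite powRrM powR_mulrn // powR_ge0. Qed.

Lemma B_pow (R : realType) p : (1 < p)%N ->
  powR (p%:R : R) (- ((p%:R - 1)^-1)) ^+ p.-1 = p%:R^-1.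
Proof.
move=> p1; rewrite powR_expn ?ler0n //.
have -> : (p.-1)%:R = (p%:R - 1 : R) by rewrite -{2}(prednK (ltnW p1)) -natr1 addrK.
rewrite mulNr mulVf ?powR_inv1 ?ler0n //.
by rewrite subr_eq0 pnatr_eq1 gtn_eqF.
Qed.

Lemma qexp_ge (R : realType) p e : (1 < p)%N -> (p.-1 <= e)%N ->
  (e.+1%:R : R) <= (qexp R p e)%:R.
Proof.
move=> p1 hpe; rewrite /qexp ltnNge hpe /=.
set x := ln (e.+1%:R : R) / ln (p%:R : R).
have lp : 0 < ln (p%:R : R) by rewrite ln_gt0 // ltr1n.
have x0 : 0 <= x by apply: divr_ge0; apply: ln_ge0; rewrite ler1n // ltnW.
have c0 : (0 <= Num.ceil x)%R by rewrite ceil_ge0; apply: lt_le_trans x0; rewrite ltrN10.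
have hc := ceil_ge x.
set m := `|Num.ceil x|%N.
have hm : (m%:R : R) = (Num.ceil x)%:~R.
  by rewrite /m natr_absz ger0_norm.
rewrite -(ler_ln) ?posrE ?ltr0n ?expn_gt0 ?(ltnW p1) //.
rewrite natrX lnXn ?ltr0n ?(ltnW p1) // -[ln _ *+ m]mulr_natr hm.
by rewrite mulrC -ler_pdivrMr.
Qed.

Theorem lemma3p3 (p : nat) (R : realType) (K : fieldType) (abs : K -> R)
  (f e : nat) (g : {poly K}) (beta : K) :
  prime p ->
  padic_field abs p ->
  g \is monic ->
  (forall i, in_Zp abs g`_i) ->
  splitting_field_over_Qp abs g ->
  root g beta ->
  abs beta = 1 ->
  ram_index abs p e ->
  residue_degree abs p f ->
  abs ((beta / omega abs p f beta) ^+ qexp R p e - 1)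
    < powR (p%:R : R) (- ((p%:R - 1)^-1)).
Proof.
move=> pp Hpf _ _ _ _ hb [e0 [hk _]] hres.
have p1 : (1 < p)%N := prime_gt1 pp.
have pR1 : (1 : R) < p%:R by rewrite ltr1n.
have pR0 : (0 : R) <= p%:R by rewrite ler0n.
have Hpos : forall x : K, x != 0 -> 0 < abs x.
  by move=> x /hk [k ->]; apply: powR_gt0; rewrite ltr0n ltnW.
have abs0 := pf_abs0 Hpf.
set N := (p ^ f)%N.
have hex : exists z, z ^+ N.-1 = 1 /\ abs (beta - z) < 1.
  have [f0|fpos] := posnP f.
    by exists beta; rewrite /N f0 expn0 /= expr0 subrr abs0 ltr01.
  exact: (@teich R K abs p pp Hpf Hpos N f erefl fpos hres beta hb).
set w := omega abs p f beta.
have [_ hw] : w ^+ N.-1 = 1 /\ abs (beta - w) < 1.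
  by rewrite /w /omega; apply: (epsilon_spec (inhabits 0) _ hex).
have hwU : abs w = 1 := abs_unit_close pp Hpf Hpos hb hw.
have w0 : w != 0 by apply/eqP => w0; move: hwU; rewrite w0 abs0 => /eqP; rewrite eq_sym oner_eq0.
set u := beta / w.
have huU : abs u = 1 by rewrite /u (pf_absM Hpf) (absV pp Hpf Hpos) // hb hwU invr1 mulr1.
have hu1 : abs (u - 1) < 1.
  have -> : u - 1 = (beta - w) / w by rewrite /u mulrBl divff.
  by rewrite (pf_absM Hpf) (absV pp Hpf Hpos) // hwU invr1 mulr1.
set c := powR (p%:R : R) (- (e%:R^-1)).
have eR0 : (0 : R) < e%:R by rewrite ltr0n.
have hc : abs (u - 1) <= c.
  have [->|ne] := eqVneq (u - 1) 0; first by rewrite abs0 powR_ge0.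
  have [k hk'] := hk _ ne; rewrite hk' in hu1 *.
  rewrite lerr_powRr //.
  move: hu1; rewrite -[X in _ < X](powRr0 (p%:R : R)) ltr_powRr // pmulr_llt0 ?invr_gt0 // ltrz0 => kneg.
  have km1 : (k <= -1)%R by lia.
  have : (k%:~R : R) <= -1 by rewrite -(ler_int R) in km1; rewrite km1.
  move=> hk1; rewrite -mulN1r; apply: ler_wpM2r => //; by rewrite invr_ge0 ltW.
have hpm1 : (p%:R - 1 : R) = (p.-1)%:R by rewrite -{1}(prednK (ltnW p1)) -natr1 addrK.
have [hlt|hge] := ltnP e p.-1.
  rewrite /qexp hlt expr1; apply: le_lt_trans hc _.
  rewrite ltr_powRr // ltrN2 hpm1 ltf_pV2 ?posrE ?ltr0n // ?ltr_nat //.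
  by rewrite -ltnS prednK // ltnW.
have hq := qexp_ge R p1 hge.
move: hq; rewrite /qexp ltnNge hge /=; set m := `|_|%N => hq.
set s := abs (u ^+ (p ^ m) - 1).
have s0 : 0 <= s := abs_ge0 Hpf Hpos _.
have key : s ^+ p.-1 < p%:R^-1.
  case: (iterate_bound pp Hpf Hpos huU hc m) => // hs.
  have s1 : s < p%:R^-1.
    apply: le_lt_trans hs _.
    rewrite /c powR_expn // -(powR_inv1 pR0) ltr_powRr //.
    rewrite mulNr ltrN2 -[X in X < _]mul1r -ltr_pdivrMr ?ltr0n ?expn_gt0 ?(ltnW p1) //.
    rewrite mul1r div1r ltf_pV2 ?posrE ?ltr0n ?expn_gt0 ?(ltnW p1) //; apply: lt_le_trans hq; by rewrite ltr_nat.
  have pinv1 : (p%:R : R)^-1 <= 1 by rewrite invf_le1 ?(lt_trans ltr01) // ltW.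
  have s1' : s <= 1 := ltW (lt_le_trans s1 pinv1).
  apply: le_lt_trans s1.
  have : (0 < p.-1)%N by rewrite -ltnS prednK // ltnW.
  case: (p.-1) => // n _; rewrite exprS -[X in _ <= X]mulr1 ler_wpM2l //.
  exact: exprn_ile1.
rewrite -/s ltNge; apply/negP => hB.
have := lerXn2r p.-1 (powR_ge0 _ _) s0 hB.
rewrite (B_pow R p1) ?nnegrE //.
by rewrite leNgt key.
Qed.
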